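(* For every $m\geq1$ and every $i\in\{1,\dots,N\}$, $$C^{(2m)}_{-i,i}\cdot v=G_i\, C^{(2m-1)}_{ii}\cdot v-\lambda_i\,C^{(2m-1)}_{-i,i}\cdot v.$$
   Context: Let $N\geq1$, $I=\{-N,\dots,-1,1,\dots,N\}$, and for $k\in I$ put $\bar k=0$ if $k>0$, $\bar k=1$ if $k<0$. The Lie superalgebra $\mathfrak{q}(N)$ over $\mathbb{C}$ is spanned by elements $F_{ij}$ ($i,j\in I$) with $F_{-i,-j}=F_{ij}$ (realized as $F_{ij}=E_{ij}+E_{-i,-j}\in\mathfrak{gl}(N|N)$), $F_{ij}$ of parity $\bar\imath+\bar\jmath\bmod 2$, and supercommutator $$[F_{ij}, F_{kl}] = \delta_{kj} F_{il} - (-1)^{(\bar{\imath}+ \bar{\jmath})(\bar{k} + \bar{l})} \delta_{il} F_{kj} + \delta_{k,-j} F_{-i,l} - (-1)^{(\bar{\imath} + \bar{\jmath})(\bar{k} + \bar{l})} \delta_{-i,l} F_{k,-j}.$$ For $n\geq1$ define $C^{(n)}_{ij}\in U(\mathfrak{q}(N))$ by $$C^{(n)}_{ij} = \sum_{k_1,\ldots,k_{n-1}\in I}F_{ik_1} (-1)^{\bar{k}_1} F_{k_1k_2} (-1)^{\bar{k}_2} \cdots F_{k_{n-2}k_{n-1}} (-1)^{\bar{k}_{n-1}} F_{k_{n-1}j}$$ (so $C^{(1)}_{ij}=F_{ij}$). For $i>0$ let $G_i=F_{-i,i}$ $(=F_{i,-i})$. Let $V$ be a representation of $\mathfrak{q}(N)$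 and $v\in V$ a vector such that $F_{ij}\cdot v=0$ whenever $|i|<|j|$, and $F_{ii}\cdot v=\lambda_i v$ for $i=1,\dots,N$, where $\lambda_1,\dots,\lambda_N\in\mathbb{C}$. *)

(* Defs.v *)
From HB Require Import structures.
From mathcomp Require Import all_boot all_order all_algebra.
Set Implicit Arguments. Unset Strict Implicit. Unset Printing Implicit Defensive.
Import Order.TTheory GRing.Theory Num.Theory.
Local Open Scope ring_scope.

(* Index set I = {-N,...,-1,1,...,N} encoded as bool * 'I_N:
   (false, a) stands for the positive index a+1,
   (true,  a) stands for the negative index -(a+1).
   Hence the parity \bar k is k.1 and |k| = k.2 + 1. *)
Definition qidx (N : nat) := (bool * 'I_N)%type.
Definition qneg N (k : qidx N) : qidx N := (~~ k.1, k.2).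
Definition qpos N (a : 'I_N) : qidx N := (false, a).
Definition qnegpos N (a : 'I_N) : qidx N := (true, a).

Definition qsign (R : ringType) N (i j k l : qidx N) : R :=
  (-1) ^+ ((i.1 (+) j.1) && (k.1 (+) l.1)).

(* rho : I x I -> End(V) is a representation of q(N): it respects the
   identification F_{-i,-j} = F_{ij} and the supercommutator relations. *)
Definition is_qrep (R : ringType) (V : lmodType R) N
    (rho : qidx N -> qidx N -> {linear V -> V}) : Prop :=
  (forall i j, rho (qneg i) (qneg j) =1 rho i j) /\
  (forall i j k l (w : V),
     rho i j (rho k l w) - qsign R i j k l *: rho k l (rho i j w) =
       ((k == j)%:R *: rho i l w)
     - qsign R i j k l *: ((i == l)%:R *: rho k j w)
     + ((k == qneg j)%:R *: rho (qneg i) l w)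
     - qsign R i j k l *: ((qneg i == l)%:R *: rho k (qneg j) w)).

(* Cop n i j = action of C^{(n+1)}_{ij}:
   C^{(1)}_{ij} = F_{ij},
   C^{(n+1)}_{ij} = sum_k F_{ik} (-1)^{\bar k} C^{(n)}_{kj}. *)
Fixpoint Cop (R : ringType) (V : lmodType R) N
    (rho : qidx N -> qidx N -> {linear V -> V}) (n : nat) (i j : qidx N) (w : V)
    : V :=
  match n with
  | 0 => rho i j w
  | n'.+1 => \sum_(k : qidx N) ((-1) ^+ k.1 *: rho i k (Cop rho n' k j w))
  end.

(* Cact n i j w = C^{(n)}_{ij} . w  for n >= 1 *)
Definition Cact (R : ringType) (V : lmodType R) N
    (rho : qidx N -> qidx N -> {linear V -> V}) (n : nat) (i j : qidx N) (w : V)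
    : V := Cop rho n.-1 i j w.

Definition qabs N (k : qidx N) : nat := (k.2 : nat).+1.

(* Main.v *)
Require Import Defs.
From HB Require Import structures.
From mathcomp Require Import all_boot all_order all_algebra.
From mathcomp Require Import ring zify.
Import Order.TTheory GRing.Theory Num.Theory.
Local Open Scope ring_scope.

Lemma sgn_prod (R : comRingType) N (a b c k d : qidx N) :
  qsign R a b c k * qsign R a b k d = qsign R a b c d.
Proof.
case: a => [[] ?]; case: b => [[] ?]; case: c => [[] ?]; case: k => [[] ?]; case: d => [[] ?];
rewrite /qsign /= ?expr0 ?expr1 ?mulrNN ?mulr1 ?mul1r //.
Qed.

Lemma sgn_ab (R : comRingType) N (a b c : qidx N) :
  (-1) ^+ a.1 * qsign R a b c a = (-1) ^+ b.1 * qsign R a b c b.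
Proof.
case: a => [[] ?]; case: b => [[] ?]; case: c => [[] ?];
rewrite /qsign /= ?expr0 ?expr1 ?mulrNN ?mulr1 ?mul1r //. 
Qed.

Lemma sgn_ab' (R : comRingType) N (a b c : qidx N) :
  (-1) ^+ (qneg a).1 * qsign R a b c (qneg a) = (-1) ^+ (qneg b).1 * qsign R a b c (qneg b).
Proof.
case: a => [[] ?]; case: b => [[] ?]; case: c => [[] ?];
rewrite /qsign /= ?expr0 ?expr1 ?mulrNN ?mulr1 ?mul1r //. 
Qed.

Lemma sum_delta_l (R : comRingType) (V : lmodType R) N (f : qidx N -> V) (g h : qidx N -> R) a :
  \sum_(k : qidx N) h k *: (g k *: ((a == k)%:R *: f k)) = h a *: (g a *: f a).
Proof.
rewrite (bigD1 a) //= eqxx scale1r big1 ?addr0 // => k; rewrite eq_sym => /negbTE ->.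
by rewrite scale0r !scaler0.
Qed.

Lemma sum_delta_r (R : comRingType) (V : lmodType R) N (f : qidx N -> V) (g h : qidx N -> R) a :
  \sum_(k : qidx N) h k *: (g k *: ((k == a)%:R *: f k)) = h a *: (g a *: f a).
Proof.
rewrite (bigD1 a) //= eqxx scale1r big1 ?addr0 // => k /negbTE ->.
by rewrite scale0r !scaler0.
Qed.

Lemma sum_const_l (R : comRingType) (V : lmodType R) N (f : qidx N -> V) (h : qidx N -> R) e :
  \sum_(k : qidx N) h k *: (e *: f k) = e *: \sum_(k : qidx N) h k *: f k.
Proof.
rewrite scaler_sumr; apply: eq_bigr => k _; by rewrite !scalerA mulrC.
Qed.

Lemma zmodAC (V : zmodType) (x1 x2 x3 x4 x6 x8 : V) :
  x1 - x2 + x3 - x4 + (x2 - x6 + x4 - x8) = x1 - x6 + x3 - x8.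
Proof.
rewrite -!addrA; congr (_ + _).
rewrite (addrCA (-x4)) (addrCA x3) addKr (addrCA (-x4)) addKr addrCA //.
Qed.

Lemma linB' (R : comRingType) (V : lmodType R) (f : {linear V -> V}) x y : f (x - y) = f x - f y.
Proof. exact: linearB. Qed.
Lemma linD' (R : comRingType) (V : lmodType R) (f : {linear V -> V}) x y : f (x + y) = f x + f y.
Proof. exact: linearD. Qed.
Lemma linZ' (R : comRingType) (V : lmodType R) (f : {linear V -> V}) (a : R) x : f (a *: x) = a *: f x.
Proof. exact: linearZ. Qed.

Lemma scal4 (R : comRingType) (V : lmodType R) (x y z e : R) (v : V) :
  x *: (y *: (z *: (e *: v))) = (y * z) *: (e *: (x *: v)).
Proof. by rewrite !scalerA; congr (_ *: _); ring. Qed.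

Lemma comm_Cop (R : comRingType) (V : lmodType R) N
    (rho : qidx N -> qidx N -> {linear V -> V}) (hrho : is_qrep rho) a b n :
  forall c d w,
  rho a b (Cop rho n c d w) - qsign R a b c d *: Cop rho n c d (rho a b w) =
  ((c == b)%:R *: Cop rho n a d w)
  - qsign R a b c d *: ((a == d)%:R *: Cop rho n c b w)
  + ((c == qneg b)%:R *: Cop rho n (qneg a) d w)
  - qsign R a b c d *: ((qneg a == d)%:R *: Cop rho n c (qneg b) w).
Proof.
elim: n => [|n IH] c d w; first exact: hrho.2.
have IHr : forall k, rho c k (rho a b (Cop rho n k d w)) - qsign R a b k d *: rho c k (Cop rho n k d (rho a b w)) =
  ((k == b)%:R *: rho c k (Cop rho n a d w))
  - qsign R a b k d *: ((a == d)%:R *: rho c k (Cop rho n k b w))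
  + ((k == qneg b)%:R *: rho c k (Cop rho n (qneg a) d w))
  - qsign R a b k d *: ((qneg a == d)%:R *: rho c k (Cop rho n k (qneg b) w)).
  move=> k; have := congr1 (rho c k) (IH k d w); rewrite !(@linB' _ _ (rho c k), @linD' _ _ (rho c k)) !(@linZ' _ _ (rho c k)); exact: id.
rewrite /= linear_sum scaler_sumr -sumrB.
rewrite (eq_bigr (fun k : qidx N => (-1)^+k.1 *: ((rho a b (rho c k (Cop rho n k d w)) - qsign R a b c k *: rho c k (rho a b (Cop rho n k d w))) + qsign R a b c k *: (rho c k (rho a b (Cop rho n k d w)) - qsign R a b k d *: rho c k (Cop rho n k d (rho a b w)))))); last first.
  move=> k _; rewrite (@linZ' _ _ (rho a b)) scalerA mulrC -scalerA -scalerBr; congr (_ *: _).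
  by rewrite scalerBr scalerA sgn_prod addrA subrK.
under eq_bigr => k _ do rewrite (hrho.2 a b c k) IHr.
under eq_bigr => k _ do rewrite !(scalerDr, scalerBr, scalerN).
rewrite !(sumrB, big_split, sumrN) /=.
rewrite !sum_const_l sum_delta_l sum_delta_l sum_delta_r sum_delta_r.
under eq_bigr => k _ do rewrite scal4 sgn_prod.
under [\sum_(i : qidx N) (-1) ^+ i.1 *: (qsign R a b c i *: _)]eq_bigr => k _ do rewrite scal4 sgn_prod.
rewrite -!scaler_sumr.
rewrite !(scalerA ((-1) ^+ _)) sgn_ab sgn_ab'.
exact: zmodAC.
Qed.

Lemma CopZ (R : comRingType) (V : lmodType R) N
    (rho : qidx N -> qidx N -> {linear V -> V}) n : forall c d (x : R) w,
  Cop rho n c d (x *: w) = x *: Cop rho n c d w.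
Proof.
elim: n => [|n IH] c d x w /=; first exact: linZ'.
rewrite scaler_sumr; apply: eq_bigr => k _.
by rewrite IH linZ' !scalerA mulrC.
Qed.

Lemma Cop0 (R : comRingType) (V : lmodType R) N
    (rho : qidx N -> qidx N -> {linear V -> V}) n c d :
  Cop rho n c d 0 = 0.
Proof. by have := @CopZ R V N rho n c d 0 0; rewrite !scale0r. Qed.

Lemma qnegK N : involutive (@qneg N).
Proof. by case=> [x y]; rewrite /qneg /= negbK. Qed.

Lemma Cop_neg (R : comRingType) (V : lmodType R) N
    (rho : qidx N -> qidx N -> {linear V -> V}) (hrho : is_qrep rho) n : forall c d w,
  Cop rho n (qneg c) (qneg d) w = (-1) ^+ n *: Cop rho n c d w.
Proof.
elim: n => [|n IH] c d w /=; first by rewrite hrho.1 scale1r.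
rewrite (reindex_inj (inv_inj (@qnegK N))) /= scaler_sumr; apply: eq_bigr => k _.
rewrite -{2}(@qnegK N k) IH hrho.1 linZ' !scalerA exprS; congr (_ *: _).
- by case: k => [[] y]; rewrite /= ?expr0 ?expr1 ?mulr1 ?mulN1r ?mul1r ?mulrN1 ?opprK.
by rewrite (@qnegK N).
Qed.

Lemma qneq_neg N (l : qidx N) : (l == qneg l) = false.
Proof. by case: l => [[] y]; rewrite /qneg /= xpair_eqE. Qed.

Lemma CopA (R : comRingType) (V : lmodType R) N
    (rho : qidx N -> qidx N -> {linear V -> V}) (hrho : is_qrep rho) (v : V)
    (hhw : forall i j : qidx N, (qabs i < qabs j)%N -> rho i j v = 0) n :
  forall a b, (qabs a < qabs b)%N -> Cop rho n a b v = 0.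
Proof.
elim: n => [|n IH] a b hab /=; first exact: hhw.
apply: big1 => l _.
case: (ltnP (qabs l) (qabs b)) => hl.
  by rewrite IH // raddf0 scaler0.
have hal : (qabs a < qabs l)%N by apply: leq_trans hab hl.
have nab : (a == b) = false by apply/eqP => E; move: hab; rewrite E ltnn.
have nab' : (qneg a == b) = false by apply/eqP => E; move: hab; rewrite -E ltnn.
have := @comm_Cop _ _ _ _ hrho a l n l b v.
rewrite hhw // Cop0 scaler0 subr0 eqxx scale1r (IH a b hab) nab nab' qneq_neg !scale0r !scaler0 !subr0 !addr0.
by move=> ->; rewrite scaler0.
Qed.

Lemma sum_split N (V : zmodType) (F : qidx N -> V) :
  \sum_(k : qidx N) F k = \sum_(y : 'I_N) (F (true, y) + F (false, y)).
Proof.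
rewrite big_split /=.
transitivity (\sum_(x : bool) \sum_(y : 'I_N) F (x, y)); last by rewrite big_bool.
rewrite pair_big /=; by apply: eq_bigr => -[].
Qed.

Theorem mainTheorem8 (R : numClosedFieldType) (N : nat) (hN : (1 <= N)%N)
    (V : lmodType R) (rho : qidx N -> qidx N -> {linear V -> V})
    (hrho : is_qrep rho) (v : V) (lambda : 'I_N -> R)
    (hhw : forall i j : qidx N, (qabs i < qabs j)%N -> rho i j v = 0)
    (hdiag : forall a : 'I_N, rho (qpos a) (qpos a) v = lambda a *: v) :
  forall (m : nat) (a : 'I_N), (1 <= m)%N ->
    Cact rho (2 * m) (qnegpos a) (qpos a) v =
      rho (qnegpos a) (qpos a) (Cact rho (2 * m - 1) (qpos a) (qpos a) v)
      - lambda a *: Cact rho (2 * m - 1) (qnegpos a) (qpos a) v.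
Proof.
move=> m a; case: m => // m _.
rewrite /Cact (_ : (2 * m.+1).-1 = (2 * m).+1)%N; last by lia.
rewrite (_ : (2 * m.+1 - 1).-1 = 2 * m)%N; last by lia.
have hn : (-1) ^+ (2 * m) = 1 :> R by rewrite exprM sqrrN expr1n expr1n.
move: (2 * m)%N hn => n hn.
rewrite /qnegpos /qpos /= sum_split (bigD1 a) //= big1 ?addr0.
  rewrite expr1 expr0 scaleN1r scale1r addrC; congr (_ - _).
  have H1 := hrho.1 (false, a) (false, a) (Cop rho n (true, a) (false, a) v).
  rewrite /= in H1; rewrite H1.
  have := @comm_Cop _ _ _ _ hrho (false, a) (false, a) n (true, a) (false, a) v.
  rewrite /qsign /= !xpair_eqE /= !eqxx /= expr0 !scale1r. rewrite !scale0r sub0r addNr subr0 (hdiag a) CopZ.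
  by move/eqP; rewrite subr_eq0 => /eqP.
move=> y hya; rewrite expr1 expr0 scaleN1r scale1r.
case: (ltngtP (val y) (val a)) => hy.
- rewrite !(@CopA _ _ _ _ hrho v hhw n); try by rewrite /qabs /= ltnS.
  by rewrite !raddf0 addr0.
- have hw1 : rho (true, a) (false, y) v = 0 by apply: hhw; rewrite /qabs /= ltnS.
  have hw2 : rho (true, a) (true, y) v = 0 by apply: hhw; rewrite /qabs /= ltnS.
  have Hf := @comm_Cop _ _ _ _ hrho (true, a) (false, y) n (false, y) (false, a) v.
  have Ht := @comm_Cop _ _ _ _ hrho (true, a) (true, y) n (true, y) (false, a) v.
  rewrite hw1 Cop0 scaler0 subr0 in Hf.
  rewrite hw2 Cop0 scaler0 subr0 in Ht.
  have Hneg := @Cop_neg _ _ _ _ hrho n (false, y) (true, y) v.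
  rewrite hn scale1r /= in Hneg.
  rewrite /qsign /= !xpair_eqE /= ?eqxx /= in Hf Ht.
  rewrite /qneg /= expr0 !scale1r !scale0r subr0 addr0 in Hf Ht.
  by rewrite Hf Ht Hneg addNr.
- by move: hya; rewrite (val_inj hy) eqxx.
Qed.
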